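(* Let $\Sigma=(X,\mathcal{S},\phi)$ be a forward complete dynamical system whose transition map $\phi$ is $\mathcal{S}$-uniformly continuous. Assume $\Sigma$ is USGES, and let $r\mapsto M(r)>0$, $r\mapsto\lambda(r)>0$ be functions such that $\|\phi(t,x,\sigma)\|\le M(r)e^{-\lambda(r)t}\|x\|$ for all $r>0$, $t\ge0$, $x\in B_X(0,r)$, $\sigma\in\mathcal{S}$. Then for every $r>0$ there exist $\underline{c}_r,\overline{c}_r>0$ and a continuous functional $V_r:X\to\mathbb{R}_+$ such that $$\underline{c}_r\|x\|\le V_r(x)\le\overline{c}_r\|x\|\quad\forall x\in B_X(0,r),$$ $$\overline{D}_\sigma V_r(x)\le-\|x\|\quad\forall x\in B_X(0,r),\ \forall\sigma\in\mathcal{S},$$ and $V_r=V_R$ on $X$ for every $R>0$ such that $\lambda(r)=\lambda(R)$ and $M(r)=M(R)$. Moreover, if $\phi$ is $\mathcal{S}$-uniformly Lipschitz continuous (respectively, $\mathcal{S}$-uniformly Lipschitz continuous on bounded sets), then $V_r$ can be taken Lipschitz continuous (respectively, Lipschitz continuous on bounded sets).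
   Context: $(X,\|\cdot\|)$ is a Banach space and $B_X(x,r)$ is the closed ball of center $x$ and radius $r$. Let $\mathcal{Q}$ be a nonempty set and $\mathcal{S}$ a set of functions $\sigma:\mathbb{R}_+\to\mathcal{Q}$ closed by time-shift (for $\sigma\in\mathcal{S}$, $\tau\ge0$, $\mathbb{T}_\tau\sigma:s\mapsto\sigma(\tau+s)$ is in $\mathcal{S}$) and by concatenation (for $\sigma_1,\sigma_2\in\mathcal{S}$, $\tau>0$, the function equal to $\sigma_1$ on $[0,\tau]$ and with $\sigma(\tau+t)=\sigma_2(t)$ for $t>0$ is in $\mathcal{S}$). A triple $\Sigma=(X,\mathcal{S},\phi)$ with $\phi:\mathbb{R}_+\times X\times\mathcal{S}\to X$ is a forward complete dynamical system if: $\phi(0,x,\sigma)=x$; $\phi(t,x,\tilde\sigma)=\phi(t,x,\sigma)$ whenever $\tilde\sigma=\sigma$ on $[0,t]$; $t\mapsto\phi(t,x,\sigma)$ is continuous; $\phi(\tau,\phi(t,x,\sigma),\mathbb{T}_t\sigma)=\phi(t+\tau,x,\sigma)$ for all $t,\tau\ge0$. $\Sigma$ is USGES if for every $r>0$ there exist $M(r),\lambda(r)>0$ with $\|\phi(t,x,\sigma)\|\le M(r)e^{-\lambda(r)t}\|x\|$ for all $t\ge0$, $x\in B_X(0,r)$, $\sigma\in\mathcal{S}$. The upper Dini derivative is $\overline{D}_\sigma V(x)=\limsup_{h\downarrow0}\frac1h\big(V(\phi(h,x,\sigma))-V(x)\big)$. $\phi$ is $\mathcal{S}$-uniformly continuous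 if for every $\bar t>0$, $x\in X$, $\varepsilon>0$ there is $\eta>0$ with $\|\phi(t,x,\sigma)-\phi(t,y,\sigma)\|\le\varepsilon$ for all $t\in[0,\bar t]$, $y\in B_X(x,\eta)$, $\sigma\in\mathcal{S}$. $\phi$ is $\mathcal{S}$-uniformly Lipschitz continuous if for every $\bar t>0$ there is $l(\bar t)>0$ with $\|\phi(t,x,\sigma)-\phi(t,y,\sigma)\|\le l(\bar t)\|x-y\|$ for all $t\in[0,\bar t]$, $x,y\in X$, $\sigma\in\mathcal{S}$; it is $\mathcal{S}$-uniformly Lipschitz continuous on bounded sets if for every $\bar t,R>0$ there is $l(\bar t,R)>0$ with the same inequality for all $t\in[0,\bar t]$, $x,y\in B_X(0,R)$, $\sigma\in\mathcal{S}$. *)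

(* Defs.v *)
From HB Require Import structures.
From mathcomp Require Import all_boot all_order all_algebra.
From mathcomp Require Import all_classical all_reals all_analysis.
Set Implicit Arguments. Unset Strict Implicit. Unset Printing Implicit Defensive.
Import Order.TTheory GRing.Theory Num.Theory.
Import numFieldNormedType.Exports.
Local Open Scope classical_set_scope.
Local Open Scope ring_scope.

(* Input signals sigma : R_+ -> Q are represented as functions R -> Q whose
   values at negative times are irrelevant (all notions below only look at
   nonnegative times). *)

Definition is_shift (R : realType) (Q : Type) (sigma : R -> Q) (tau : R)
  (sigma' : R -> Q) : Prop :=
  forall s, 0 <= s -> sigma' s = sigma (tau + s).

Definition is_concat (R : realType) (Q : Type) (sigma1 sigma2 : R -> Q) (tau : R)
  (sigma : R -> Q) : Prop :=
  (forall t, 0 <= t -> t <= tau -> sigma t = sigma1 t) /\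
  (forall t, 0 < t -> sigma (tau + t) = sigma2 t).

Definition shift_concat_closed (R : realType) (Q : Type) (S : set (R -> Q)) : Prop :=
  (forall sigma tau, S sigma -> 0 <= tau ->
     exists sigma', S sigma' /\ is_shift sigma tau sigma') /\
  (forall sigma1 sigma2 tau, S sigma1 -> S sigma2 -> 0 < tau ->
     exists sigma, S sigma /\ is_concat sigma1 sigma2 tau sigma).

Definition forward_complete (R : realType) (X : normedModType R) (Q : Type)
  (S : set (R -> Q)) (phi : R -> X -> (R -> Q) -> X) : Prop :=
  [/\ (forall x sigma, S sigma -> phi 0 x sigma = x),
      (forall t x sigma sigma', S sigma -> S sigma' -> 0 <= t ->
         (forall s, 0 <= s -> s <= t -> sigma' s = sigma s) ->
         phi t x sigma' = phi t x sigma),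
      (forall x sigma, S sigma ->
         {within `[0, +oo[, continuous (fun t => phi t x sigma)}) &
      (forall t tau x sigma sigma', S sigma -> S sigma' -> 0 <= t -> 0 <= tau ->
         is_shift sigma t sigma' ->
         phi tau (phi t x sigma) sigma' = phi (t + tau) x sigma)].

Definition cball0 (R : realType) (X : normedModType R) (r : R) : set X :=
  [set x | `|x| <= r].

Definition S_unif_cont (R : realType) (X : normedModType R) (Q : Type)
  (S : set (R -> Q)) (phi : R -> X -> (R -> Q) -> X) : Prop :=
  forall (tbar : R) (x : X) (eps : R), 0 < tbar -> 0 < eps ->
    exists eta : R, 0 < eta /\
      forall t y sigma, 0 <= t -> t <= tbar -> `|x - y| <= eta -> S sigma ->
        `|phi t x sigma - phi t y sigma| <= eps.

Definition S_unif_lipschitz (R : realType) (X : normedModType R) (Q : Type)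
  (S : set (R -> Q)) (phi : R -> X -> (R -> Q) -> X) : Prop :=
  forall tbar : R, 0 < tbar ->
    exists l : R, 0 < l /\
      forall t x y sigma, 0 <= t -> t <= tbar -> S sigma ->
        `|phi t x sigma - phi t y sigma| <= l * `|x - y|.

Definition S_unif_lipschitz_bounded (R : realType) (X : normedModType R) (Q : Type)
  (S : set (R -> Q)) (phi : R -> X -> (R -> Q) -> X) : Prop :=
  forall tbar Rb : R, 0 < tbar -> 0 < Rb ->
    exists l : R, 0 < l /\
      forall t x y sigma, 0 <= t -> t <= tbar -> S sigma ->
        `|x| <= Rb -> `|y| <= Rb ->
        `|phi t x sigma - phi t y sigma| <= l * `|x - y|.

Definition upper_dini (R : realType) (X : normedModType R) (Q : Type)
  (phi : R -> X -> (R -> Q) -> X) (V : X -> R) (sigma : R -> Q) (x : X) : \bar R :=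
  limf_esup (fun h : R => ((V (phi h x sigma) - V x) / h)%:E) (0 : R)^'+.

Definition lipschitz_functional (R : realType) (X : normedModType R) (V : X -> R) : Prop :=
  exists L : R, forall x y : X, `|V x - V y| <= L * `|x - y|.

Definition lipschitz_bounded_functional (R : realType) (X : normedModType R)
  (V : X -> R) : Prop :=
  forall Rb : R, 0 < Rb ->
    exists L : R, forall x y : X, `|x| <= Rb -> `|y| <= Rb ->
      `|V x - V y| <= L * `|x - y|.

Definition lyapunov_family (R : realType) (X : normedModType R) (Q : Type)
  (S : set (R -> Q)) (phi : R -> X -> (R -> Q) -> X) (M lam : R -> R)
  (V : R -> X -> R) : Prop :=
  forall r : R, 0 < r ->
    [/\ exists cl ch : R, [/\ 0 < cl, 0 < ch &
          forall x : X, `|x| <= r -> cl * `|x| <= V r x /\ V r x <= ch * `|x| ],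
        continuous (V r),
        (forall x : X, 0 <= V r x),
        (forall (x : X) sigma, S sigma -> `|x| <= r ->
           (upper_dini phi (V r) sigma x <= (- `|x|)%:E)%E) &
        (forall Rr : R, 0 < Rr -> lam r = lam Rr -> M r = M Rr -> V r = V Rr)].

(* Main.v *)
Require Import Defs.
From HB Require Import structures.
From mathcomp Require Import all_boot all_order all_algebra.
From mathcomp Require Import all_classical all_reals all_analysis.
From mathcomp Require Import ring lra.
Import Order.TTheory GRing.Theory Num.Theory.
Import numFieldNormedType.Exports.
Local Open Scope classical_set_scope.
Local Open Scope ring_scope.
Set Implicit Arguments. Unset Strict Implicit. Unset Printing Implicit Defensive.
Lemma phi_ext (R : realType) (X : completeNormedModType R) (Q : Type)
  (S : set (R -> Q)) (phi : R -> X -> (R -> Q) -> X) :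
  shift_concat_closed S -> forward_complete S phi -> S_unif_cont S phi ->
  forall t y s1 s2, S s1 -> S s2 -> 0 <= t ->
  (forall s, 0 < s -> s1 s = s2 s) -> phi t y s1 = phi t y s2.
Proof.
move=> [SCs SCc] [ph0 caus cont semi] UC t y s1 s2 Ss1 Ss2 t0 e12.
have [->|tpos] := eqVneq t 0; first by rewrite !ph0.
have {}tpos : 0 < t by rewrite lt_neqAle eq_sym tpos t0.
suff H : forall e, 0 < e -> `|phi t y s1 - phi t y s2| <= e + e.
  apply/eqP; rewrite -subr_eq0 -normr_eq0; apply/eqP.
  set d := `|_|; have d0 : 0 <= d by exact: normr_ge0.
  have [->//|dne] := eqVneq d 0.
  have dpos : 0 < d by rewrite lt_neqAle eq_sym dne d0.
  have := H (d / 3) (divr_gt0 dpos (ltr0Sn _ 2)); rewrite -/d => hh; exfalso; lra.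
move=> e e0.
have [eta [eta0 Heta]] := UC t y e tpos e0.
have c1 := ((continuous_within_itvcyP _ _).1 (cont y s1 Ss1)).2.
have c2 := ((continuous_within_itvcyP _ _).1 (cont y s2 Ss2)).2.
move/cvgrPdist_le: c1 => /(_ eta eta0) n1.
move/cvgrPdist_le: c2 => /(_ eta eta0) n2.
have [eps [[h1 h2] [eps0 epst]]] := filter_ex (filterI (filterI n1 n2) (filterI (nbhs_right_gt 0) (nbhs_right_lt tpos))).
rewrite !ph0 // in h1 h2.
have [k1 [Sk1 sh1]] := SCs s1 eps Ss1 (ltW eps0).
have [k2 [Sk2 sh2]] := SCs s2 eps Ss2 (ltW eps0).
have te : t = eps + (t - eps) by rewrite addrC subrK.
have tau0 : 0 <= t - eps by rewrite subr_ge0 ltW.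
have E1 := semi eps (t - eps) y s1 k1 Ss1 Sk1 (ltW eps0) tau0 sh1.
have E2 := semi eps (t - eps) y s2 k2 Ss2 Sk2 (ltW eps0) tau0 sh2.
rewrite -te in E1 E2; rewrite -E1 -E2.
have ek : phi (t - eps) y k2 = phi (t - eps) y k1.
  apply: caus => // s s0 _; rewrite sh1 // sh2 // e12 //.
  lra.
have tle : t - eps <= t by rewrite lerBlDr lerDl ltW.
apply: le_trans (ler_distD (phi (t - eps) y k1) _ _) _.
apply: lerD.
  rewrite distrC; apply: Heta => //.
rewrite -ek; apply: Heta => //.
Qed.

Definition Aset (R : realType) (X : normedModType R) (Q : Type)
  (S : set (R -> Q)) (phi : R -> X -> (R -> Q) -> X) (mu T : R) (x : X) : set R :=
  [set e | e = `|x| \/ exists sigma t,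
     [/\ S sigma, 0 <= t, t <= T & e = expR (mu * t) * `|phi t x sigma|]].

Definition Hdecay (R : realType) (X : normedModType R) (Q : Type)
  (S : set (R -> Q)) (phi : R -> X -> (R -> Q) -> X) (M lam : R -> R) :=
  (forall r : R, 0 < r -> 0 < M r /\ 0 < lam r) /\
  (forall (r t : R) (x : X) (sigma : R -> Q), 0 < r -> 0 <= t -> `|x| <= r ->
     S sigma -> `|phi t x sigma| <= M r * expR (- lam r * t) * `|x|).

Lemma expR_mono (R : realType) (a b : R) : a <= b -> expR a <= expR b.
Proof. by rewrite ler_expR. Qed.

Lemma phi_bound (R : realType) (X : normedModType R) (Q : Type)
  (S : set (R -> Q)) (phi : R -> X -> (R -> Q) -> X) (M lam : R -> R) :
  Hdecay S phi M lam -> forall t x sigma, 0 <= t -> S sigma ->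
  `|phi t x sigma| <= M (`|x| + 1) * `|x|.
Proof.
move=> [Hp Hd] t x sigma t0 Ss.
have r0 : 0 < `|x| + 1 by rewrite ltr_wpDl.
have [M0 l0] := Hp _ r0.
apply: le_trans (Hd _ _ _ _ r0 t0 _ Ss) _; first by rewrite lerDl.
rewrite -mulrA ler_pM2l //; apply: ler_piMl => //.
by rewrite expR_le1 mulNr oppr_le0; apply: mulr_ge0 => //; exact: ltW.
Qed.

Lemma A_has_sup (R : realType) (X : normedModType R) (Q : Type)
  (S : set (R -> Q)) (phi : R -> X -> (R -> Q) -> X) (M lam : R -> R) mu T x :
  Hdecay S phi M lam -> 0 <= mu -> has_sup (Aset S phi mu T x).
Proof.
move=> Hd mu0; split; first by exists `|x|; left.
have r0 : 0 < `|x| + 1 by rewrite ltr_wpDl.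
have [M0 l0] := Hd.1 _ r0.
exists (`|x| + expR (mu * T) * (M (`|x| + 1) * `|x|)) => e [->|[sigma [t [Ss t0 tT ->]]]].
  rewrite lerDl; apply: mulr_ge0; first exact: expR_ge0.
  by apply: mulr_ge0 => //; exact: ltW.
apply: le_trans (_ : expR (mu * T) * (M (`|x| + 1) * `|x|) <= _); last first.
  by rewrite lerDr.
apply: ler_pM; rewrite ?expR_ge0 //.
  by apply: expR_mono; apply: ler_wpM2l.
exact: phi_bound Hd t x sigma t0 Ss.
Qed.

Lemma A_ge (R : realType) (X : normedModType R) (Q : Type)
  (S : set (R -> Q)) (phi : R -> X -> (R -> Q) -> X) (M lam : R -> R) mu T x :
  Hdecay S phi M lam -> 0 <= mu -> `|x| <= sup (Aset S phi mu T x).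
Proof.
move=> Hd mu0; apply: sup_upper_bound; first exact: A_has_sup Hd mu0.
by left.
Qed.

Lemma A_mem (R : realType) (X : normedModType R) (Q : Type)
  (S : set (R -> Q)) (phi : R -> X -> (R -> Q) -> X) (M lam : R -> R) mu T x sigma t :
  Hdecay S phi M lam -> 0 <= mu -> S sigma -> 0 <= t -> t <= T ->
  expR (mu * t) * `|phi t x sigma| <= sup (Aset S phi mu T x).
Proof.
move=> Hd mu0 Ss t0 tT; apply: sup_upper_bound; first exact: A_has_sup Hd mu0.
by right; exists sigma, t.
Qed.

Lemma A_le (R : realType) (X : normedModType R) (Q : Type)
  (S : set (R -> Q)) (phi : R -> X -> (R -> Q) -> X) (M lam : R -> R) mu T x r :
  Hdecay S phi M lam -> 0 <= mu -> 0 < r -> mu <= lam r -> `|x| <= r ->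
  sup (Aset S phi mu T x) <= (1 + M r) * `|x|.
Proof.
move=> Hd mu0 r0 mul xr; apply: ge_sup; first by exists `|x|; left.
have [M0 l0] := Hd.1 _ r0.
move=> e [->|[sigma [t [Ss t0 tT ->]]]].
  by apply: ler_peMl => //; rewrite lerDl ltW.
apply: le_trans (_ : M r * `|x| <= _); last first.
  by rewrite mulrDl mul1r lerDr.
apply: le_trans (ler_wpM2l (expR_ge0 _) (Hd.2 _ _ _ _ r0 t0 xr Ss)) _.
have -> : expR (mu * t) * (M r * expR (- lam r * t) * `|x|) = M r * (expR (mu * t - lam r * t) * `|x|) by rewrite expRD mulNr; ring.
rewrite ler_pM2l //; apply: ler_piMl => //; rewrite expR_le1.
have : 0 <= t * (lam r - mu) by rewrite mulr_ge0 // subr_ge0.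
lra.
Qed.

Lemma A_diff (R : realType) (X : normedModType R) (Q : Type)
  (S : set (R -> Q)) (phi : R -> X -> (R -> Q) -> X) (M lam : R -> R) mu T x y d :
  Hdecay S phi M lam -> 0 <= mu -> 0 <= d ->
  (forall sigma t, S sigma -> 0 <= t -> t <= T -> `|phi t x sigma - phi t y sigma| <= d) ->
  `|sup (Aset S phi mu T x) - sup (Aset S phi mu T y)| <= `|x - y| + expR (mu * T) * d.
Proof.
move=> Hd mu0 d0 Hxy.
have key : forall a b, (forall sigma t, S sigma -> 0 <= t -> t <= T ->
     `|phi t a sigma - phi t b sigma| <= d) ->
   sup (Aset S phi mu T a) <= sup (Aset S phi mu T b) + (`|a - b| + expR (mu * T) * d).
  move=> a b Hab; apply: ge_sup; first by exists `|a|; left.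
  have ed : 0 <= expR (mu * T) * d by rewrite mulr_ge0 ?expR_ge0.
  move=> e [->|[sigma [t [Ss t0 tT ->]]]].
    have := A_ge T b Hd mu0; have := ler_distD b a 0; rewrite !subr0.
    rewrite (distrC a b); lra.
  have := @A_mem _ _ _ S phi M lam mu T a sigma t Hd mu0 Ss t0 tT.
  have h1 := @A_mem _ _ _ S phi M lam mu T b sigma t Hd mu0 Ss t0 tT.
  have h2 : `|phi t a sigma| <= `|phi t b sigma| + d.
    have := ler_distD (phi t b sigma) (phi t a sigma) 0; rewrite !subr0.
    have := Hab sigma t Ss t0 tT; have := normr_ge0 (a - b); lra.
  have h3 : expR (mu * t) <= expR (mu * T) by apply: expR_mono; apply: ler_wpM2l.
  have h4 : expR (mu * t) * `|phi t a sigma| <= expR (mu * t) * `|phi t b sigma| + expR (mu * T) * d.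
    apply: le_trans (ler_wpM2l (expR_ge0 _) h2) _.
    rewrite mulrDr lerD2l; exact: ler_wpM2r.
  move=> _; have := normr_ge0 (a - b); lra.
rewrite ler_distl; apply/andP; split.
  have Hyx : forall sigma t, S sigma -> 0 <= t -> t <= T ->
      `|phi t y sigma - phi t x sigma| <= d.
    by move=> sigma t Ss t0 tT; rewrite distrC; apply: Hxy.
  have := key y x Hyx.
  rewrite distrC; lra.
have := key x y Hxy; lra.
Qed.

Lemma A_decr (R : realType) (X : completeNormedModType R) (Q : Type)
  (S : set (R -> Q)) (phi : R -> X -> (R -> Q) -> X) (M lam : R -> R) mu T r x sigma h :
  shift_concat_closed S -> forward_complete S phi -> S_unif_cont S phi ->
  Hdecay S phi M lam -> 0 < r -> 0 <= mu -> mu <= lam r ->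
  M r * expR (- (lam r - mu) * T) <= 1 -> 0 < h -> h <= T -> `|x| <= r -> S sigma ->
  sup (Aset S phi mu T (phi h x sigma)) <= expR (- (mu * h)) * sup (Aset S phi mu T x).
Proof.
move=> SC FC UC Hd r0 mu0 mul HT h0 hT xr Ss.
have SC' := SC; have FC' := FC.
move: SC' FC' => [SCs SCc] [ph0 caus cont semi].
have eK : forall a, expR (- (mu * h)) * (expR (mu * h) * a) = a.
  by move=> a; rewrite mulrA -expRD addNr expR0 mul1r.
have Es : expR (- (mu * h)) >= 0 by exact: expR_ge0.
apply: ge_sup; first by exists `|phi h x sigma|; left.
move=> e [->|[s' [t [Ss' t0 tT ->]]]].
  rewrite -[X in X <= _](eK `|phi h x sigma|); apply: ler_wpM2l => //.
  exact: A_mem Hd mu0 Ss (ltW h0) hT.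
have [s2 [Ss2 [c1 c2]]] := SCc sigma s' h Ss Ss' h0.
have [rho [Srho shr]] := SCs s2 h Ss2 (ltW h0).
have y_eq : phi h x sigma = phi h x s2 by apply: (caus h x s2 sigma Ss2 Ss (ltW h0)) => s s0 sh; rewrite c1.
have p_eq : phi t (phi h x sigma) s' = phi t (phi h x sigma) rho.
  apply: (phi_ext SC FC UC) => // s s0; rewrite shr ?ltW // c2 //.
rewrite p_eq y_eq semi //; last exact: ltW.
have ht0 : 0 <= h + t by rewrite addr_ge0 // ltW.
have -> : expR (mu * t) * `|phi (h + t) x s2| =
    expR (- (mu * h)) * (expR (mu * (h + t)) * `|phi (h + t) x s2|).
  by rewrite mulrA -expRD; congr (expR _ * _); ring.
apply: ler_wpM2l => //.
have [htT|Tht] := leP (h + t) T; first exact: A_mem Hd mu0 Ss2 ht0 htT.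
apply: le_trans (A_ge T x Hd mu0).
have [M0 l0] := Hd.1 _ r0.
apply: le_trans (ler_wpM2l (expR_ge0 _) (Hd.2 _ _ _ _ r0 ht0 xr Ss2)) _.
have -> : expR (mu * (h + t)) * (M r * expR (- lam r * (h + t)) * `|x|) =
   (M r * expR (- (lam r - mu) * (h + t))) * `|x|.
  have ee : expR (- (lam r - mu) * (h + t)) = expR (mu * (h + t)) * expR (- lam r * (h + t)).
    by rewrite -expRD; congr expR; ring.
  by rewrite ee; ring.
apply: ler_piMl => //; apply: le_trans HT.
rewrite ler_pM2l //; apply: expR_mono.
have : 0 <= (lam r - mu) * (h + t - T) by rewrite mulr_ge0 // subr_ge0 // ltW.
nra.
Qed.

Lemma expR_half (R : realType) (E u Eu : R) : E * Eu = 1 -> 1 + u <= Eu -> 0 < E ->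
  0 <= u -> u <= 1 -> E <= 1 - u / 2.
Proof.
move=> h1 h2 h3 h4 h5.
have H1 : E * (1 + u) <= 1 by rewrite -[X in _ <= X]h1 ler_pM2l.
nra.
Qed.

Definition Vf (R : realType) (X : normedModType R) (Q : Type)
  (S : set (R -> Q)) (phi : R -> X -> (R -> Q) -> X) (m l : R) (x : X) : R :=
  (4 / l) * sup (Aset S phi (l / 2) (2 * m / l) x).

Lemma HT_ok (R : realType) (m l : R) : 0 < m -> 0 < l ->
  m * expR (- (l - l / 2) * (2 * m / l)) <= 1.
Proof.
move=> m0 l0.
have -> : - (l - l / 2) * (2 * m / l) = - m by field; rewrite gt_eqF.
rewrite expRN ler_pdivrMr ?expR_gt0 // mul1r.
have := expR_ge1Dx m; lra.
Qed.

Lemma Vf_dini (R : realType) (X : completeNormedModType R) (Q : Type)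
  (S : set (R -> Q)) (phi : R -> X -> (R -> Q) -> X) (M lam : R -> R) r x sigma :
  shift_concat_closed S -> forward_complete S phi -> S_unif_cont S phi ->
  Hdecay S phi M lam -> 0 < r -> `|x| <= r -> S sigma ->
  (upper_dini phi (Vf S phi (M r) (lam r)) sigma x <= (- `|x|)%:E)%E.
Proof.
move=> SC FC UC Hd r0 xr Ss.
have [m0 l0] := Hd.1 _ r0.
set m := M r in m0 *; set l := lam r in l0 *.
set mu := l / 2; set T := 2 * m / l.
have mu0 : 0 < mu by rewrite divr_gt0.
have T0 : 0 < T by rewrite divr_gt0 // mulr_gt0.
have iu0 : 0 < 1 / mu by rewrite divr_gt0.
rewrite /upper_dini /limf_esup.
apply: ge_ereal_inf.
set V0 := (fun h : R => 0 < h) `&` ((fun h : R => h < T) `&` (fun h : R => h < 1 / mu)).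
have V0F : (0 : R)^'+ V0.
  exact: filterI (nbhs_right_gt 0) (filterI (nbhs_right_lt T0) (nbhs_right_lt iu0)).
eexists; first by exists V0.
apply: ge_ereal_sup => _ [h [h0 [hT hmu]] <-].
rewrite lee_fin ler_pdivrMr //.
rewrite /Vf -/m -/l -/mu -/T.
set sA := sup (Aset S phi mu T x).
set sy := sup (Aset S phi mu T (phi h x sigma)).
have mul : mu <= l by rewrite /mu; lra.
have Hdec : sy <= expR (- (mu * h)) * sA.
  apply: (A_decr SC FC UC Hd r0 (ltW mu0) mul _ h0 (ltW hT) xr Ss).
  exact: HT_ok.
have sAx : `|x| <= sA := A_ge T x Hd (ltW mu0).
have sA0 : 0 <= sA by apply: le_trans sAx.
have Eb : expR (- (mu * h)) <= 1 - (mu * h) / 2.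
  apply: (expR_half (Eu := expR (mu * h))).
  - by rewrite -expRD addNr expR0.
  - exact: expR_ge1Dx.
  - exact: expR_gt0.
  - by rewrite mulr_ge0 // ltW.
  - by move: hmu; rewrite ltr_pdivlMr // => hmu; rewrite mulrC ltW.
have c0 : 0 <= 4 / l by rewrite divr_ge0 // ltW.
have P1 : 4 / l * sy <= 4 / l * ((1 - (mu * h) / 2) * sA).
  apply: ler_wpM2l => //; apply: le_trans Hdec _; exact: ler_wpM2r.
have P2 : 4 / l * ((1 - (mu * h) / 2) * sA) = 4 / l * sA - h * sA.
  by rewrite /mu; field; rewrite gt_eqF.
have P3 : h * `|x| <= h * sA by apply: ler_wpM2l => //; exact: ltW.
lra.
Qed.

Lemma Vf_diff (R : realType) (X : normedModType R) (Q : Type)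
  (S : set (R -> Q)) (phi : R -> X -> (R -> Q) -> X) (M lam : R -> R) r x y d :
  Hdecay S phi M lam -> 0 < r -> 0 <= d ->
  (forall sigma t, S sigma -> 0 <= t -> t <= 2 * M r / lam r ->
     `|phi t x sigma - phi t y sigma| <= d) ->
  `|Vf S phi (M r) (lam r) x - Vf S phi (M r) (lam r) y| <=
    4 / lam r * (`|x - y| + expR (lam r / 2 * (2 * M r / lam r)) * d).
Proof.
move=> Hd r0 d0 H.
have [m0 l0] := Hd.1 _ r0.
have c0 : 0 <= 4 / lam r by rewrite divr_ge0 // ltW.
rewrite /Vf -mulrBr normrM (ger0_norm c0).
apply: ler_wpM2l => //.
apply: A_diff Hd _ d0 H.
by rewrite divr_ge0 ?ltW.
Qed.

Lemma lyap (R : realType) (X : completeNormedModType R) (Q : Type)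
  (S : set (R -> Q)) (phi : R -> X -> (R -> Q) -> X) (M lam : R -> R) :
  shift_concat_closed S -> forward_complete S phi -> S_unif_cont S phi ->
  Hdecay S phi M lam ->
  lyapunov_family S phi M lam (fun r => Vf S phi (M r) (lam r)).
Proof.
move=> SC FC UC Hd r r0.
have [m0 l0] := Hd.1 _ r0.
have mu0 : 0 <= lam r / 2 by rewrite divr_ge0 ?ltW.
have c0 : 0 < 4 / lam r by rewrite divr_gt0.
have T0 : 0 < 2 * M r / lam r by rewrite divr_gt0 // mulr_gt0.
split.
- exists (4 / lam r), (4 / lam r * (1 + M r)); split => //.
    by rewrite mulr_gt0 // ltr_wpDr // ltW.
  move=> x xr; rewrite /Vf; split.
    by rewrite ler_pM2l //; apply: A_ge Hd mu0.
  rewrite -[4 / lam r * (1 + M r) * _]mulrA ler_pM2l //; apply: A_le Hd mu0 r0 _ xr.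
  have := l0; lra.
- move=> x; apply/cvgrPdist_le => eps eps0.
  set K := expR (lam r / 2 * (2 * M r / lam r)).
  have K0 : 0 < K by exact: expR_gt0.
  set e' := eps / (2 * (4 / lam r) * K).
  have e'0 : 0 < e' by rewrite divr_gt0 // mulr_gt0 // mulr_gt0.
  have [eta [eta0 Heta]] := UC _ x e' T0 e'0.
  set dl := Num.min eta (eps / (2 * (4 / lam r))).
  have dl0 : 0 < dl by rewrite lt_min eta0 divr_gt0 // mulr_gt0.
  have := (@cvgr_dist_lt _ _ _ (nbhs x) _ id x (@cvg_id _ (nbhs x)) dl) dl0.
  move=> Hn; near=> z.
  have hz : `|x - z| < dl by near: z; exact: Hn.
  have hz1 : `|x - z| <= eta by apply: ltW; apply: lt_le_trans hz _; rewrite ge_min lexx.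
  have hz2 : `|x - z| <= eps / (2 * (4 / lam r)).
    by apply: ltW; apply: lt_le_trans hz _; rewrite ge_min lexx orbT.
  apply: le_trans (Vf_diff (y := z) (d := e') Hd r0 (ltW e'0) _) _.
    by move=> sigma t Ss t0 tT; apply: Heta.
  have E1 : 4 / lam r * (eps / (2 * (4 / lam r))) = eps / 2.
    by field; rewrite gt_eqF.
  have E2 : 4 / lam r * (K * e') = eps / 2.
    by rewrite /e'; field; rewrite !gt_eqF.
  rewrite mulrDr E2.
  have : 4 / lam r * `|x - z| <= eps / 2 by rewrite -E1; apply: ler_wpM2l => //; exact: ltW.
  lra.
- move=> x; rewrite /Vf; apply: mulr_ge0; first exact: ltW.
  apply: le_trans (A_ge _ x Hd mu0); exact: normr_ge0.
- move=> x sigma Ss xr; exact: Vf_dini SC FC UC Hd r0 xr Ss.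
- by move=> Rr _ el em; rewrite el em.
Unshelve. all: by end_near.
Qed.

Theorem theorem5 (R : realType) (X : completeNormedModType R) (Q : Type)
  (S : set (R -> Q)) (phi : R -> X -> (R -> Q) -> X) (M lam : R -> R) :
  inhabited Q ->
  shift_concat_closed S ->
  forward_complete S phi ->
  S_unif_cont S phi ->
  (forall r : R, 0 < r -> 0 < M r /\ 0 < lam r) ->
  (forall (r t : R) (x : X) (sigma : R -> Q), 0 < r -> 0 <= t -> `|x| <= r ->
     S sigma -> `|phi t x sigma| <= M r * expR (- lam r * t) * `|x|) ->
  [/\ (exists V : R -> X -> R, lyapunov_family S phi M lam V),
      (S_unif_lipschitz S phi ->
         exists V : R -> X -> R, lyapunov_family S phi M lam V /\
           forall r : R, 0 < r -> lipschitz_functional (V r)) &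
      (S_unif_lipschitz_bounded S phi ->
         exists V : R -> X -> R, lyapunov_family S phi M lam V /\
           forall r : R, 0 < r -> lipschitz_bounded_functional (V r))].
Proof.
move=> _ SC FC UC Hp Hdc.
have Hd : Hdecay S phi M lam by split.
have L := lyap SC FC UC Hd.
split; first by exists (fun r => Vf S phi (M r) (lam r)).
- move=> HL; exists (fun r => Vf S phi (M r) (lam r)); split => // r r0.
  have [m0 l0] := Hp _ r0.
  have T0 : 0 < 2 * M r / lam r by rewrite divr_gt0 // mulr_gt0.
  have [k [k0 Hk]] := HL _ T0.
  exists (4 / lam r * (1 + expR (lam r / 2 * (2 * M r / lam r)) * k)) => x y.
  apply: le_trans (Vf_diff (d := k * `|x - y|) Hd r0 _ _) _.
  - by rewrite mulr_ge0 // ltW.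
  - by move=> sigma t Ss t0 tT; apply: Hk.
  - by rewrite le_eqVlt; apply/orP; left; apply/eqP; ring.
- move=> HL; exists (fun r => Vf S phi (M r) (lam r)); split => // r r0 Rb Rb0.
  have [m0 l0] := Hp _ r0.
  have T0 : 0 < 2 * M r / lam r by rewrite divr_gt0 // mulr_gt0.
  have [k [k0 Hk]] := HL _ _ T0 Rb0.
  exists (4 / lam r * (1 + expR (lam r / 2 * (2 * M r / lam r)) * k)) => x y xR yR.
  apply: le_trans (Vf_diff (d := k * `|x - y|) Hd r0 _ _) _.
  - by rewrite mulr_ge0 // ltW.
  - by move=> sigma t Ss t0 tT; apply: Hk.
  - by rewrite le_eqVlt; apply/orP; left; apply/eqP; ring.
Qed.
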